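(* Let $\mathcal{C}_1$ be an arbitrary $(n_1,k_1)$ systematic binary linear code with generator matrix $\boldsymbol{G}$ (a $k_1\times n_1$ matrix over $\mathbb{F}_2$), and let $\mathcal{S}_\nu$ be the length-$\nu$ systematic single parity-check code. Let $\mathcal{C}$ be the product code consisting of all $\nu\times n_1$ binary arrays whose rows are codewords of $\mathcal{C}_1$ and whose columns are codewords of $\mathcal{S}_\nu$ (i.e., have even Hamming weight). Then the weight enumerator function of $\mathcal{C}$ is $$A_{\mathcal{C}}(z) = 2^{-k_1}\sum_{\boldsymbol{v}\in\{0,1\}^{k_1}}\left(\sum_{\boldsymbol{u}\in\{0,1\}^{k_1}}(-1)^{\boldsymbol{u}\cdot\boldsymbol{v}^{\mathrm{T}}} z^{w_{\mathrm{H}}(\boldsymbol{u}\boldsymbol{G})}\right)^{\nu}.$$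
   Context: $w_{\mathrm{H}}(\cdot)$ denotes Hamming weight; $\boldsymbol{u}\boldsymbol{G}$ is computed over $\mathbb{F}_2$; $\boldsymbol{u}\cdot\boldsymbol{v}^{\mathrm{T}}=\sum_i u_iv_i$ (only its parity matters). The weight enumerator function of a binary code $\mathcal{C}$ of length $N$ is $A_{\mathcal{C}}(z) = \sum_{i=0}^{N} A_i z^i$, where $A_i$ is the number of codewords of Hamming weight $i$. *)

(* Defs.v *)
From HB Require Import structures.
From mathcomp Require Import all_boot all_order all_algebra.
Set Implicit Arguments. Unset Strict Implicit. Unset Printing Implicit Defensive.
Import GRing.Theory Num.Theory.
Local Open Scope ring_scope.

Definition wH (m n : nat) (A : 'M['F_2]_(m, n)) : nat :=
  #|[set p : 'I_m * 'I_n | A p.1 p.2 != 0]|.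

Definition systematic (k n : nat) (G : 'M['F_2]_(k, n)) : Prop :=
  exists h : (k <= n)%N, forall i j : 'I_k, G i (widen_ord h j) = (i == j)%:R.

Definition lin_code (k n : nat) (G : 'M['F_2]_(k, n)) (c : 'rV['F_2]_n) : bool :=
  [exists u : 'rV['F_2]_k, c == u *m G].

Definition spc_code (nu : nat) (c : 'cV['F_2]_nu) : bool := ~~ odd (wH c).

Definition product_code (k n nu : nat) (G : 'M['F_2]_(k, n)) (c : 'M['F_2]_(nu, n)) : bool :=
  [forall i, lin_code G (row i c)] && [forall j, spc_code (col j c)].

Definition weight_enum (m n : nat) (C : pred 'M['F_2]_(m, n)) : {poly rat} :=
  \sum_(i < (m * n).+1)
     (#|[set c : 'M['F_2]_(m, n) | C c && (wH c == i)]|)%:R *: 'X^i.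

(* u . v^T = sum_i u_i v_i (as a natural number; only parity matters) *)
Definition dotn (k : nat) (u v : 'rV['F_2]_k) : nat :=
  (\sum_(i < k) (val (u ord0 i) * val (v ord0 i)))%N.

(* Main.v *)
Require Import Defs.
From HB Require Import structures.
From mathcomp Require Import all_boot all_order all_algebra.
Import GRing.Theory Num.Theory.
Local Open Scope ring_scope.
Set Implicit Arguments. Unset Strict Implicit. Unset Printing Implicit Defensive.

Lemma F2E (x : 'F_2) : x = (x != 0)%:R.
Proof. by case: x => [[|[|m]] Hm] //; apply/val_inj. Qed.

Lemma F2nat0 (n : nat) : ((n%:R : 'F_2) == 0) = ~~ odd n.
Proof.
have H := val_Fp_nat (isT : prime 2) n.
by rewrite -val_eqE [X in (X == _)]H modn2; case: (odd n).
Qed.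

Lemma sgnE (n m : nat) : (n%:R : 'F_2) = m%:R -> ((-1) ^+ n : rat) = (-1) ^+ m.
Proof.
move=> H; rewrite -signr_odd -(signr_odd _ m); congr (_ ^+ _).
have Hn := val_Fp_nat (isT : prime 2) n; have Hm := val_Fp_nat (isT : prime 2) m.
move: (congr1 val H); rewrite [X in X = _]Hn [X in _ = X]Hm !modn2.
by case: (odd n); case: (odd m).
Qed.

Definition dF k (u v : 'rV['F_2]_k) : 'F_2 := \sum_i u ord0 i * v ord0 i.

Lemma dotnE k (u v : 'rV['F_2]_k) : (dotn u v)%:R = dF u v.
Proof.
rewrite /dotn natr_sum; apply: eq_bigr => i _.
by rewrite natrM -[u _ _ in RHS]natr_Zp -[v _ _ in RHS]natr_Zp.
Qed.

Lemma wHE m n (A : 'M['F_2]_(m, n)) : wH A = (\sum_i \sum_j ((A i j != 0%R) : nat))%N.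
Proof.
rewrite /wH pair_big /= -sum1_card big_mkcond /=.
by apply: eq_bigr => p _; rewrite inE; case: (A p.1 p.2 != 0).
Qed.

Lemma dF_suml k (I : finType) (f : I -> 'rV['F_2]_k) v :
  dF (\sum_i f i) v = \sum_i dF (f i) v.
Proof.
rewrite /dF (exchange_big) /=; apply: eq_bigr => j _.
by rewrite summxE mulr_suml.
Qed.

Lemma dF_addr k (s v e : 'rV['F_2]_k) : dF s (v + e) = dF s v + dF s e.
Proof. by rewrite /dF -big_split; apply: eq_bigr => j _; rewrite mxE mulrDr. Qed.

Lemma char_sum k (s : 'rV['F_2]_k) :
  \sum_(v : 'rV['F_2]_k) ((-1) ^+ (dotn s v) : rat) = if s == 0 then (2 ^ k)%:R else 0.
Proof.
case: eqP => [->|/eqP Hs].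
  rewrite (eq_bigr (fun _ => 1)) => [|v _]; last first.
    by rewrite /dotn big1 // => i _; rewrite mxE.
  by rewrite sumr_const card_mx card_Fp // mul1n.
have [j Hj] : exists j, s ord0 j != 0.
  case: (pickP (fun j => s ord0 j != 0)) => [j Hj | H]; first by exists j.
  by case/eqP: Hs; apply/rowP => j; rewrite mxE; move: (H j) => /negbFE /eqP.
set e : 'rV['F_2]_k := delta_mx ord0 j.
have He : dF s e = 1.
  rewrite /dF (bigD1 j) //= big1 => [|i Hij]; last by rewrite mxE eqxx /= (negbTE Hij) mulr0.
  by rewrite mxE !eqxx addr0 mulr1 [s _ _]F2E Hj.
set S := \sum_v _.
have HS : S = - S.
  rewrite {1}/S (reindex_inj (addIr e)) /= -sumrN; apply: eq_bigr => v _.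
  rewrite -[RHS]mulN1r -exprS; apply: sgnE.
  by rewrite -[(dotn s v).+1]addn1 natrD !dotnE dF_addr He.
have : S + S = 0 by rewrite {1}HS addNr.
by move/eqP; rewrite -mulr2n -mulr_natr mulf_eq0 => /orP [/eqP //|].
Qed.

Section Code.
Variables (k n : nat) (G : 'M['F_2]_(k, n)) (h : (k <= n)%N).
Hypothesis Hsys : forall i j : 'I_k, G i (widen_ord h j) = (i == j)%:R.

Lemma decode (u : 'rV['F_2]_k) : \row_j (u *m G) ord0 (widen_ord h j) = u.
Proof.
apply/rowP => j; rewrite !mxE (bigD1 j) //= big1 => [|l Hl]; last by rewrite Hsys (negbTE Hl) mulr0.
by rewrite Hsys eqxx mulr1 addr0.
Qed.

Lemma encode_inj (u u' : 'rV['F_2]_k) : u *m G = u' *m G -> u = u'.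
Proof. by move=> H; rewrite -(decode u) -(decode u') H. Qed.
End Code.

Lemma wH_le m n (A : 'M['F_2]_(m, n)) : (wH A < (m * n).+1)%N.
Proof. by rewrite ltnS /wH; apply: leq_trans (max_card _) _; rewrite card_prod !card_ord. Qed.

Lemma weight_enumE m n (C : pred 'M['F_2]_(m, n)) :
  weight_enum C = \sum_(c | C c) 'X^(wH c).
Proof.
rewrite /weight_enum.
transitivity (\sum_(i < (m*n).+1) \sum_c (if C c && (wH c == i) then ('X^i : {poly rat}) else 0)).
  apply: eq_bigr => i _.
  rewrite scaler_nat -sumr_const big_mkcond /=; apply: eq_bigr => c _; by rewrite inE.
rewrite exchange_big /= [RHS]big_mkcond /=; apply: eq_bigr => c _.
case: (C c) => /=; last by rewrite big1.
by rewrite -big_mkcond /= (big_pred1 (Ordinal (wH_le c))) // => i; rewrite eq_sym -val_eqE.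
Qed.

Lemma rhsE k n nu (G : 'M['F_2]_(k, n)) :
  (2%:R ^- k : rat) *:
    \sum_(v : 'rV['F_2]_k)
      (\sum_(u : 'rV['F_2]_k) (-1) ^+ (dotn u v) *: 'X^(wH (u *m G))) ^+ nu
  = \sum_(f : {ffun 'I_nu -> 'rV['F_2]_k})
      (if \sum_i f i == 0 then 'X^(\sum_i wH (f i *m G)) else 0).
Proof.
transitivity ((2%:R ^- k : rat) *: \sum_(f : {ffun 'I_nu -> 'rV['F_2]_k})
   (\sum_(v : 'rV['F_2]_k) \prod_i ((-1) ^+ (dotn (f i) v) : rat)) *: 'X^(\sum_i wH (f i *m G))).
  congr (_ *: _).
  under [RHS]eq_bigr => f _ do rewrite scaler_suml.
  rewrite [RHS]exchange_big /=; apply: eq_bigr => v _.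
  rewrite -[nu in _ ^+ nu]card_ord -prodr_const (eq_bigl xpredT) //.
  rewrite bigA_distr_bigA /=; apply: eq_bigr => f _.
  by rewrite scaler_prod !prodrXr.
rewrite scaler_sumr; apply: eq_bigr => f _.
have -> : \sum_(v : 'rV['F_2]_k) \prod_i ((-1) ^+ (dotn (f i) v) : rat)
        = \sum_(v : 'rV['F_2]_k) (-1) ^+ (dotn (\sum_i f i) v).
  apply: eq_bigr => v _; rewrite prodrXr; apply: sgnE.
  by rewrite natr_sum dotnE dF_suml; apply: eq_bigr => i _; rewrite dotnE.
rewrite char_sum; case: eqP => _; last by rewrite scale0r scaler0.
by rewrite scalerA natrX mulVf ?scale1r // expf_neq0.
Qed.

Lemma lhsE k n nu (G : 'M['F_2]_(k, n)) : systematic G ->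
  \sum_(c : 'M['F_2]_(nu, n) | product_code G c) ('X^(wH c) : {poly rat})
  = \sum_(f : {ffun 'I_nu -> 'rV['F_2]_k})
      (if \sum_i f i == 0 then 'X^(\sum_i wH (f i *m G)) else 0).
Proof.
move=> [h Hsys].
pose enc (f : {ffun 'I_nu -> 'rV['F_2]_k}) : 'M['F_2]_(nu, n) := \matrix_(i, j) (f i *m G) ord0 j.
pose dec (c : 'M['F_2]_(nu, n)) : {ffun 'I_nu -> 'rV['F_2]_k} := [ffun i => \row_j c i (widen_ord h j)].
have rowenc f i : row i (enc f) = f i *m G by apply/rowP => j; rewrite !mxE.
have decenc f : dec (enc f) = f.
  apply/ffunP => i; rewrite ffunE -[RHS](decode Hsys (f i)); apply/rowP => j; by rewrite !mxE.
have encdec c : product_code G c -> enc (dec c) = c.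
  case/andP => /forallP Hr _; apply/matrixP => i j; rewrite mxE ffunE.
  have /existsP [u /eqP Hu] := Hr i.
  have -> : \row_j0 c i (widen_ord h j0) = u.
    by rewrite -(decode Hsys u) -Hu; apply/rowP => l; rewrite !mxE.
  by rewrite -Hu mxE.
have E f j : (\sum_i enc f i j) = ((\sum_i f i) *m G) ord0 j.
  by rewrite mulmx_suml summxE; apply: eq_bigr => i _; rewrite mxE.
have Penc f : product_code G (enc f) = (\sum_i f i == 0).
  rewrite /product_code.
  have -> : [forall i, lin_code G (row i (enc f))].
    by apply/forallP => i; apply/existsP; exists (f i); rewrite rowenc.
  rewrite /=.
  transitivity [forall j, (\sum_i enc f i j == 0)].
    apply: eq_forallb => j; rewrite /spc_code wHE -F2nat0 natr_sum.
    by congr (_ == 0); apply: eq_bigr => i _; rewrite big_ord1 mxE [RHS]F2E.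
  transitivity ((\sum_i f i) *m G == 0).
    apply/forallP/eqP => [H|H j]; last by rewrite E H mxE.
    by apply/rowP => j; rewrite -E mxE; apply/eqP/H.
  apply/eqP/eqP => [H|->]; last by rewrite mul0mx.
  by apply: (encode_inj Hsys); rewrite H mul0mx.
have wenc f : wH (enc f) = (\sum_i wH (f i *m G))%N.
  rewrite wHE; apply: eq_bigr => i _; rewrite wHE big_ord1; apply: eq_bigr => j _.
  by rewrite !mxE.
rewrite (reindex_onto enc dec encdec) /= big_mkcond; apply: eq_bigr => f _.
by rewrite Penc decenc eqxx andbT wenc.
Qed.

Theorem theorem3 (k1 n1 nu : nat) (G : 'M['F_2]_(k1, n1)) :
  systematic G ->
  weight_enum (product_code G : pred 'M['F_2]_(nu, n1)) =
  (2%:R ^- k1 : rat) *: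
    \sum_(v : 'rV['F_2]_k1)
      (\sum_(u : 'rV['F_2]_k1) (-1) ^+ (dotn u v) *: 'X^(wH (u *m G))) ^+ nu.
Proof. by move=> HG; rewrite rhsE weight_enumE lhsE. Qed.
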